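(* Let $f\colon X\to Y$ be a function of metric spaces, $m\ge0$, and let $D^{(m+1)}_f\colon\mathbb R_+\times\mathbb R_+\to\mathbb R_+$ be an $m$-dimensional control function of $f$. Define inductively, for $k>m+1$, $D^{(k)}_f(r_X,R_Y)=D^{(k-1)}_f(3r_X,R_Y)+2r_X$. Then each $D^{(k)}_f$ ($k\ge m+1$) is an $(m,k)$-dimensional control function of $f$.
   Context: For $r>0$, the $r$-components of $C\subset X$ are the equivalence classes of points of $C$ joined by finite sequences in $C$ with consecutive distances $\le r$. An $m$-dimensional control function of $f$ is $D_f\colon\mathbb R_+\times\mathbb R_+\to\mathbb R_+$ such that for all $r_X,R_Y>0$ every $A\subset X$ with $\operatorname{diam} f(A)\le R_Y$ is the union of $m+1$ sets whose $r_X$-components have diameter $\le D_f(r_X,R_Y)$. For $k\ge m+1\ge1$, an $(m,k)$-dimensional control function of $f$ is $D_f\colon\mathbb R_+\times\mathbb R_+\to\mathbb R_+$ such that for all $r_X,R_Y>0$ every $A\subset X$ with $\operatorname{diam} f(A)\le R_Y$ can be written as $A_1\cup\dots\cup A_k$ where the $r_X$-components of each $A_i$ have diameter $\le D_f(r_X,R_Y)$ and every $x\in A$ belongs to at least $k-m$ of the sets $A_i$. *)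

(* Defs.v *)
From Stdlib Require Import Reals List Relations.
Open Scope R_scope.

Definition is_metric {X : Type} (d : X -> X -> R) : Prop :=
  (forall x y, 0 <= d x y) /\
  (forall x y, d x y = 0 <-> x = y) /\
  (forall x y, d x y = d y x) /\
  (forall x y z, d x z <= d x y + d y z).

Definition diam_le {X : Type} (d : X -> X -> R) (S : X -> Prop) (D : R) : Prop :=
  forall x y, S x -> S y -> d x y <= D.

Definition r_step {X : Type} (d : X -> X -> R) (C : X -> Prop) (r : R) : relation X :=
  fun a b => C a /\ C b /\ d a b <= r.

Definition same_r_component {X : Type} (d : X -> X -> R) (C : X -> Prop) (r : R)
    (x y : X) : Prop :=
  C x /\ C y /\ clos_refl_trans X (r_step d C r) x y.

Definition r_components_diam_le {X : Type} (d : X -> X -> R) (C : X -> Prop)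
    (r D : R) : Prop :=
  forall x y, same_r_component d C r x y -> d x y <= D.

Definition dim_control {X Y : Type} (dX : X -> X -> R) (dY : Y -> Y -> R)
    (f : X -> Y) (m : nat) (D : R -> R -> R) : Prop :=
  (forall rX RY, 0 < rX -> 0 < RY -> 0 <= D rX RY) /\
  forall rX RY, 0 < rX -> 0 < RY ->
  forall A : X -> Prop, diam_le dY (fun y => exists x, A x /\ f x = y) RY ->
  exists B : nat -> X -> Prop,
    (forall x, A x <-> exists i, (i < S m)%nat /\ B i x) /\
    (forall i, (i < S m)%nat -> r_components_diam_le dX (B i) rX (D rX RY)).

Definition dim_mk_control {X Y : Type} (dX : X -> X -> R) (dY : Y -> Y -> R)
    (f : X -> Y) (m k : nat) (D : R -> R -> R) : Prop :=
  (forall rX RY, 0 < rX -> 0 < RY -> 0 <= D rX RY) /\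
  forall rX RY, 0 < rX -> 0 < RY ->
  forall A : X -> Prop, diam_le dY (fun y => exists x, A x /\ f x = y) RY ->
  exists B : nat -> X -> Prop,
    (forall x, A x <-> exists i, (i < k)%nat /\ B i x) /\
    (forall i, (i < k)%nat -> r_components_diam_le dX (B i) rX (D rX RY)) /\
    (forall x, A x -> exists l : list nat,
        NoDup l /\ (k - m <= length l)%nat /\
        forall i, In i l -> (i < k)%nat /\ B i x).

(* D_iter D0 j = D^{(m+1+j)} given D^{(m+1)} = D0:
   D^{(k)}(r,R) = D^{(k-1)}(3r,R) + 2r *)
Fixpoint D_iter (D0 : R -> R -> R) (j : nat) : R -> R -> R :=
  match j with
  | O => D0
  | S j' => fun rX RY => D_iter D0 j' (3 * rX) RY + 2 * rX
  end.

(* Main.v *)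
Require Import Defs.
From Stdlib Require Import Reals List Relations.
From Stdlib Require Import Lra Lia Classical.
Open Scope R_scope.

Lemma chain_lift {X : Type} (R1 R2 : relation X) (Q : X -> X -> Prop) :
  (forall x y a, R1 x y -> Q x a -> exists b, Q y b /\ R2 a b) ->
  forall x y, clos_refl_trans X R1 x y -> forall a, Q x a ->
  exists b, Q y b /\ clos_refl_trans X R2 a b.
Proof.
  intros H x y Hc. induction Hc as [x y Hxy| x | x y z _ IH1 _ IH2]; intros a Ha.
  - destruct (H x y a Hxy Ha) as [b [Hb Hab]]. exists b; split; auto. now apply rt_step.
  - exists a; split; auto. apply rt_refl.
  - destruct (IH1 a Ha) as [b [Hb Hab]]. destruct (IH2 b Hb) as [c [Hc Hbc]].
    exists c; split; auto. eapply rt_trans; eauto.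
Qed.

Lemma step_lemma (X Y : Type) (dX : X -> X -> R) (dY : Y -> Y -> R)
    (HX : is_metric dX) (f : X -> Y) (m k : nat) (Hk : (S m <= k)%nat)
    (D : R -> R -> R) (HD : dim_mk_control dX dY f m k D) :
  dim_mk_control dX dY f m (S k) (fun rX RY => D (3 * rX) RY + 2 * rX).
Proof.
  destruct HX as [Hpos [Hz [Hsym Htri]]].
  assert (Hxx : forall x, dX x x = 0) by (intro; now apply Hz).
  destruct HD as [Hnn Hc]. split.
  { intros rX RY H1 H2. specialize (Hnn (3 * rX) RY ltac:(lra) H2). lra. }
  intros rX RY HrX HRY A HA.
  destruct (Hc (3 * rX) RY ltac:(lra) HRY A HA) as [B [Hcov [Hdiam Hmult]]].
  set (Cj := fun j x => A x /\ exists a, B j a /\ dX x a <= rX).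
  set (E := fun x => A x /\ forall j, (j < k)%nat -> Cj j x -> B j x).
  exists (fun i x => ((i < k)%nat /\ Cj i x) \/ (i = k /\ E x)).
  split; [|split].
  - intro x; split.
    + intro Ax. destruct (proj1 (Hcov x) Ax) as [i [Hi Bi]].
      exists i; split; [lia|]. left; split; auto. split; auto.
      exists x; split; auto. rewrite Hxx; lra.
    + intros [i [Hi [[_ [Ax _]] | [_ [Ax _]]]]]; auto.
  - intros i Hi x y [Hx [Hy Hxy]]. destruct Hx as [[Hik HC]|[Hik HE]].
    + destruct HC as [Ax [a [Ba Hxa]]].
      destruct (chain_lift (Defs.r_step dX (fun x => ((i < k)%nat /\ Cj i x) \/ (i = k /\ E x)) rX) (Defs.r_step dX (B i) (3 * rX))
                  (fun x a => B i a /\ dX x a <= rX)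
                  (ltac:(intros x0 y0 a0 [_ [Hy0 Hd0]] [Ba0 Hxa0];
                        destruct Hy0 as [[_ [_ [b [Bb Hyb]]]] | [He _]]; [|lia];
                        exists b; split; [split; auto|];
                        split; [auto|split; auto];
                        pose proof (Htri a0 x0 y0); pose proof (Htri a0 y0 b);
                        rewrite (Hsym a0 x0) in *; lra))
                  x y Hxy a (conj Ba Hxa)) as [b [[Bb Hyb] Hab]].
      assert (Hd : dX a b <= D (3 * rX) RY).
      { apply (Hdiam i Hik a b). repeat split; auto. }
      pose proof (Htri x a y); pose proof (Htri a b y). rewrite (Hsym b y) in *. lra.
    + subst i. destruct HE as [Ax HEx].
      destruct (Hmult x Ax) as [l [Hnd [Hlen Hl]]].
      destruct l as [|i0 l]; [simpl in Hlen; lia|].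
      destruct (Hl i0 (or_introl eq_refl)) as [Hi0 Bi0].
      destruct (chain_lift (Defs.r_step dX (fun x => ((k < k)%nat /\ Cj k x) \/ (k = k /\ E x)) rX) (Defs.r_step dX (B i0) (3 * rX))
                  (fun x a => a = x /\ B i0 x)
                  (ltac:(intros x0 y0 a0 [_ [Hy0 Hd0]] [Ea0 Bx0]; subst a0;
                        destruct Hy0 as [[Hkk _] | [_ [Ay0 HEy]]]; [lia|];
                        assert (By : B i0 y0) by
                          (apply HEy; auto; split; auto; exists x0; split; auto;
                           rewrite Hsym; auto);
                        exists y0; split; auto; split; auto; split; auto; lra))
                  x y Hxy x (conj eq_refl Bi0)) as [b [[Eb Bb] Hab]].
      subst b. assert (Hd : dX x y <= D (3 * rX) RY).
      { apply (Hdiam i0 Hi0 x y). repeat split; auto. }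
      lra.
  - intros x Ax. destruct (Hmult x Ax) as [l [Hnd [Hlen Hl]]].
    assert (HCx : forall j, (j < k)%nat -> B j x -> Cj j x).
    { intros j Hj Bj. split; auto. exists x; split; auto. rewrite Hxx; lra. }
    destruct (classic (E x)) as [HE | HnE].
    + exists (k :: l). split; [|split].
      * constructor; auto. intro Hin. destruct (Hl k Hin); lia.
      * cbn [length]. lia.
      * intros i [<- | Hin]. { split; [lia|]. right; auto. }
        destruct (Hl i Hin) as [Hi Bi]. split; [lia|]. left; auto.
    + assert (Hex : exists j, (j < k)%nat /\ Cj j x /\ ~ B j x).
      { apply NNPP; intro Hn. apply HnE. split; auto. intros j Hj HC.
        apply NNPP; intro HB. apply Hn. exists j; auto. }
      destruct Hex as [j [Hj [HC HnB]]].
      exists (j :: l). split; [|split].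
      * constructor; auto. intro Hin. destruct (Hl j Hin); auto.
      * cbn [length]. lia.
      * intros i [<- | Hin]. { split; [lia|]. left; auto. }
        destruct (Hl i Hin) as [Hi Bi]. split; [lia|]. left; auto.
Qed.

Theorem mainTheorem13 (X Y : Type) (dX : X -> X -> R) (dY : Y -> Y -> R)
    (HX : is_metric dX) (HY : is_metric dY) (f : X -> Y) (m : nat)
    (D0 : R -> R -> R) (HD : dim_control dX dY f m D0) :
  forall k : nat, (S m <= k)%nat ->
    dim_mk_control dX dY f m k (D_iter D0 (k - S m)).
Proof.
  assert (Main : forall j, dim_mk_control dX dY f m (S m + j) (D_iter D0 j)).
  { induction j as [|j IH].
    - rewrite Nat.add_0_r. destruct HD as [Hnn Hc]. split; auto.
      intros rX RY H1 H2 A HA. destruct (Hc rX RY H1 H2 A HA) as [B [Hcov Hd]].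
      exists B. split; [|split]; auto.
      intros x Ax. destruct (proj1 (Hcov x) Ax) as [i [Hi Bi]].
      exists (i :: nil). split; [constructor; auto; constructor|]. split; [cbn [length]; lia|].
      intros i' [<- | []]; auto.
    - rewrite Nat.add_succ_r. simpl D_iter.
      apply (step_lemma X Y dX dY HX f m (S m + j)); auto. lia. }
  intros k Hk. remember (k - S m)%nat as j. assert (k = S m + j)%nat by lia.
  subst k. apply Main.
Qed.
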